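(* Let $G$ be a cactus. Then $G$ is in $B_0$ if and only if $G$ contains none of $M_2$, $M_3$, and $C_r$ for any $r\ge 4$ as an induced subgraph.
   Context: A cactus is a connected graph in which any two simple cycles have at most one vertex in common. $C_r$ denotes the cycle on $r$ vertices. $M_2$ is the graph on vertices $a,b,c,d,e,f,g$ with edges $ab,ac,ad,be,cf,dg$. $M_3$ is the graph on vertices $a,b,c,d,e,f$ with edges $ab,ac,bc,ad,be,cf$. $B_0$ is the class of graphs having an EPG representation (a set of paths on a rectangular grid, one per vertex, two vertices adjacent iff their paths share a grid edge) in which no path has a bend. *)

(* Defs.v *)
From mathcomp Require Import all_boot all_order all_algebra.
Set Implicit Arguments. Unset Strict Implicit. Unset Printing Implicit Defensive.
Import GRing.Theory Num.Theory.

Definition simple_graph (T : finType) (e : rel T) : Prop :=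
  symmetric e /\ irreflexive e.

Definition connected_graph (T : finType) (e : rel T) : Prop :=
  forall x y : T, connect e x y.

Definition simple_cycle (T : finType) (e : rel T) (s : seq T) : Prop :=
  [/\ 3 <= size s, uniq s & cycle e s].

Definition cycle_edges (T : finType) (s : seq T) : {set T * T} :=
  [set p | (p.1 \in s) && ((next s p.1 == p.2) || (next s p.2 == p.1))].

(* Cactus: connected graph in which any two (distinct) simple cycles
   have at most one vertex in common. Two cycles are the same subgraph
   iff they have the same edge set. *)
Definition cactus (T : finType) (e : rel T) : Prop :=
  [/\ simple_graph e, connected_graph e &
    forall s1 s2 : seq T, simple_cycle e s1 -> simple_cycle e s2 ->
      cycle_edges s1 != cycle_edges s2 ->
      #|[set x | (x \in s1) && (x \in s2)]| <= 1].

Definition induced_sub (U : finType) (h : rel U) (T : finType) (e : rel T) : Prop :=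
  exists f : U -> T, injective f /\ forall x y : U, e (f x) (f y) = h x y.

Definition Cr_rel (r : nat) : rel 'I_r :=
  fun i j => ((i.+1 %% r) == j) || ((j.+1 %% r) == i).

(* M2: a=0,b=1,c=2,d=3,e=4,f=5,g=6; edges ab ac ad be cf dg. *)
Definition M2_edges : seq (nat * nat) :=
  [:: (0,1); (0,2); (0,3); (1,4); (2,5); (3,6)]%N.
Definition M2_rel : rel 'I_7 :=
  fun i j => ((val i, val j) \in M2_edges) || ((val j, val i) \in M2_edges).

(* M3: a=0,b=1,c=2,d=3,e=4,f=5; edges ab ac bc ad be cf. *)
Definition M3_edges : seq (nat * nat) :=
  [:: (0,1); (0,2); (1,2); (0,3); (1,4); (2,5)]%N.
Definition M3_rel : rel 'I_6 :=
  fun i j => ((val i, val j) \in M3_edges) || ((val j, val i) \in M3_edges).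

(* A grid edge: its lower/left endpoint and a direction
   (false = horizontal, from (x,y) to (x+1,y); true = vertical, to (x,y+1)). *)
Definition grid_edge : Type := ((int * int) * bool)%type.

(* A path on the grid with no bend: a straight segment starting at point
   [start], going in direction [dir] (right or up), with [len] >= 1 grid edges. *)
Record straight_path := StraightPath {
  sp_start : int * int;
  sp_dir : bool;
  sp_len : nat }.

Definition sp_step (d : bool) (k : nat) (p : int * int) : int * int :=
  if d then (p.1, p.2 + k%:Z)%R else (p.1 + k%:Z, p.2)%R.

Definition on_path (P : straight_path) (g : grid_edge) : Prop :=
  exists2 k : nat, (k < sp_len P)%N &
    g = (sp_step (sp_dir P) k (sp_start P), sp_dir P).

Definition B0 (T : finType) (e : rel T) : Prop :=
  exists P : T -> straight_path,
    (forall v, (0 < sp_len (P v))%N) /\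
    forall u v : T, u != v ->
      (e u v <-> exists g : grid_edge, on_path (P u) g /\ on_path (P v) g).

(* Main.v *)
Require Import Defs.
From mathcomp Require Import all_boot all_order all_algebra.
From mathcomp Require Import zify.
Set Implicit Arguments. Unset Strict Implicit. Unset Printing Implicit Defensive.
Import GRing.Theory Num.Theory Order.TTheory.

Definition spline (P : straight_path) : int :=
  if sp_dir P then (sp_start P).1 else (sp_start P).2.
Definition sppos (P : straight_path) : int :=
  if sp_dir P then (sp_start P).2 else (sp_start P).1.

Lemma share_iff P Q : (0 < sp_len P)%N -> (0 < sp_len Q)%N ->
  (exists g, on_path P g /\ on_path Q g) <->
  [/\ sp_dir P = sp_dir Q, spline P = spline Q,
      (sppos P <= sppos Q + (sp_len Q)%:Z - 1)%R &
      (sppos Q <= sppos P + (sp_len P)%:Z - 1)%R].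
Proof.
case: P => [[p1 p2] d l]; case: Q => [[q1 q2] d' l'] /= lp lq.
rewrite /spline /sppos /=; split.
  case=> [[g gd] [[k /= hk E1] [k' /= hk' E2]]].
  move: E1 E2 => [-> ->] []; rewrite /sp_step; case: d => /=; case: d' => //=;
    move=> [e1 e2] _; split => //; lia.
case=> ed el h1 h2; subst d'.
have [le|lt] := lerP (if d then p2 else p1) (if d then q2 else q1).
  exists (sp_step d `|((if d then q2 else q1) - (if d then p2 else p1))%R|%N (p1, p2), d).
  split.
    exists (`|((if d then q2 else q1) - (if d then p2 else p1))%R|%N) => //=.
    move: le h1 h2 el; case: d => /=; lia.
  exists 0%N => //.
  move: le h1 h2 el; rewrite /sp_step; case: d => /= le h1 h2 el; congr (_, _); congr (_, _); lia.
exists (sp_step d `|((if d then p2 else p1) - (if d then q2 else q1))%R|%N (q1, q2), d).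
split.
  exists 0%N => //.
  move: lt h1 h2 el; rewrite /sp_step; case: d => /= le h1 h2 el; congr (_, _); congr (_, _); lia.
exists (`|((if d then p2 else p1) - (if d then q2 else q1))%R|%N) => //=.
move: lt h1 h2 el; case: d => /=; lia.
Qed.

Section Cyc.
Variables (T : finType) (e : rel T).
Hypothesis esym : symmetric e.
Hypothesis eirr : irreflexive e.
Hypothesis ecact : forall s1 s2 : seq T, simple_cycle e s1 -> simple_cycle e s2 ->
      cycle_edges s1 != cycle_edges s2 ->
      #|[set x | (x \in s1) && (x \in s2)]| <= 1.

Lemma cactus_two s1 s2 x y a : simple_cycle e s1 -> simple_cycle e s2 ->
  x != y -> x \in s1 -> y \in s1 -> x \in s2 -> y \in s2 ->
  a \in s1 -> a \notin s2 -> False.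
Proof.
move=> c1 c2 nxy x1 y1 x2 y2 a1 a2.
have big : 1 < #|[set z | (z \in s1) && (z \in s2)]|.
  have sub : [set x; y] \subset [set z | (z \in s1) && (z \in s2)].
    by apply/subsetP => z; rewrite !inE => /orP[] /eqP ->; rewrite ?x1 ?x2 ?y1 ?y2.
  by have := subset_leq_card sub; rewrite cards2 nxy.
have : ~~ (cycle_edges s1 != cycle_edges s2).
  by apply/negP => /(ecact c1 c2); rewrite leqNgt big.
rewrite negbK => /eqP E.
have : (a, next s1 a) \in cycle_edges s1 by rewrite inE /= a1 eqxx.
by rewrite E inE /= (negbTE a2).
Qed.

Lemma chord_split x A y B : uniq (x :: A ++ y :: B) -> cycle e (x :: A ++ y :: B) ->
  e x y -> A != [::] -> B != [::] -> False.
Proof.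
move=> U C exy nA nB.
have U1 : uniq (x :: rcons A y).
  apply: subseq_uniq U; rewrite -cats1 /= eqxx; apply: cat_subseq => //.
  by rewrite /= eqxx sub0seq.
have U2 : uniq (y :: rcons B x).
  have : uniq (rot (size (x :: A)) ((x :: A) ++ y :: B)) by rewrite rot_uniq.
  rewrite rot_size_cat => U'; apply: subseq_uniq U'.
  rewrite -cats1 /= eqxx; apply: cat_subseq => //; by rewrite /= eqxx sub0seq.
move: C; rewrite /cycle rcons_cat cat_path /= => /and3P[pA eAy pB].
have c1 : simple_cycle e (x :: rcons A y).
  split => //; first by rewrite /= size_rcons !ltnS lt0n size_eq0.
  by rewrite /= rcons_path rcons_path pA eAy last_rcons esym.
have c2 : simple_cycle e (y :: rcons B x).
  split => //; first by rewrite /= size_rcons !ltnS lt0n size_eq0.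
  by rewrite /= rcons_path pB last_rcons.
case: A nA U c1 U1 pA eAy => [//|a A'] _ U c1 U1 pA eAy.
apply: (cactus_two c1 c2 (x := x) (y := y) (a := a)).
- by apply/eqP => Exy; move: U; rewrite Exy /= !inE mem_cat !inE eqxx !orbT.
- by rewrite inE eqxx.
- by rewrite inE mem_rcons inE eqxx orbT.
- by rewrite inE mem_rcons inE eqxx orbT.
- by rewrite inE eqxx.
- by rewrite !inE eqxx orbT.
- move: U => /= /andP[nx /andP[na _]].
  move: nx na; rewrite !inE !mem_cat !inE !negb_or => /andP[nxa _] /andP[_ /andP[nay naB]].
  by rewrite mem_rcons !inE negb_or nay naB eq_sym nxa.
Qed.

Lemma cycle_nth x0 s : cycle e s -> forall i, i < size s ->
  e (nth x0 s i) (nth x0 s (i.+1 %% size s)).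
Proof.
case: s => [//|y s'] C i hi.
move: C; rewrite /cycle => /(pathP x0) /(_ i); rewrite size_rcons => /(_ hi).
rewrite -rcons_cons nth_rcons hi nth_rcons /=.
have [lt|ge] := ltnP i (size s').
  by rewrite modn_small.
have -> : i = size s' by move: hi; rewrite /=; lia.
by rewrite eqxx modnn.
Qed.

Lemma Cr_irr n (i : 'I_n) : 2 <= n -> ~~ Cr_rel i i.
Proof.
move=> n2; rewrite /Cr_rel orbb; have := ltn_ord i.
case: (ltnP i.+1 n) => h hi; first by rewrite modn_small // neq_ltn ltnSn orbT.
have -> : i.+1 = n by lia.
by rewrite modnn; apply/eqP => E; move: n2 hi; rewrite -E; lia.
Qed.

Hypothesis noC : forall r, 4 <= r -> ~ induced_sub (Cr_rel (r:=r)) e.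

Lemma aux_sz n j : j < n -> j <> n - 1 -> n - j.+1 + 0 <> 0.
Proof. lia. Qed.

Lemma chord_at x0 s i j : uniq s -> cycle e s -> i < j -> j < size s ->
  j != i.+1 -> (i == 0) && (j == (size s).-1) = false ->
  e (nth x0 s i) (nth x0 s j) -> False.
Proof.
move=> U C ij js nc1 nc2 E.
set A := take (j - i - 1) (drop i.+1 s).
set B := drop j.+1 s ++ take i s.
have R : rot i s = nth x0 s i :: A ++ nth x0 s j :: B.
  rewrite /rot (drop_nth x0) ?(ltn_trans ij) //.
  rewrite -[drop i.+1 s](cat_take_drop (j - i - 1)) drop_drop.
  have -> : j - i - 1 + i.+1 = j by lia.
  by rewrite [drop j s](drop_nth x0) // /B /= -catA.
apply: (chord_split (x := nth x0 s i) (A := A) (y := nth x0 s j) (B := B)).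
- by rewrite -R rot_uniq.
- by rewrite -R rot_cycle.
- exact: E.
- rewrite -size_eq0 /A size_take size_drop; apply/eqP; move: nc1 js ij => /eqP h1 h2 h3; case: ltnP; lia.
- rewrite -size_eq0 /B size_cat size_drop size_take; apply/eqP.
  have hi : i < size s by lia.
  rewrite hi; move: nc2.
  rewrite -subn1; case: (i =P 0) => [->|ni]; case: (j =P (size s - 1)) => [->|nj]; rewrite ?eqxx //= => _; try lia.
  exact: (aux_sz js nj).
Qed.

Lemma no_long_cycle s : uniq s -> cycle e s -> 4 <= size s -> False.
Proof.
case: s => [//|x0 s'] U C sz; set s := x0 :: s' in U C sz.
set n := size s.
pose f := fun i : 'I_n => nth x0 s i.
have finj : injective f.
  by move=> i1 i2 /eqP; rewrite /f nth_uniq // => /eqP /val_inj.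
have CrE : forall i j : 'I_n, Cr_rel i j -> e (f i) (f j).
  move=> i j; rewrite /f /Cr_rel => /orP[] /eqP <-; first exact: cycle_nth.
  by rewrite esym; apply: cycle_nth.
case: (boolP [forall i : 'I_n, forall j : 'I_n, e (f i) (f j) == Cr_rel i j]).
  move=> /forallP H; apply: (noC (r := n) sz); exists f; split => // i j.
  by have /forallP /(_ j) /eqP := H i.
rewrite negb_forall => /existsP [i]; rewrite negb_forall => /existsP [j] N.
have ej : e (f i) (f j).
  case: (boolP (Cr_rel i j)) => [c|c]; first exact: CrE.
  by move: N; rewrite (negbTE c); case: (e _ _).
have cj : ~~ Cr_rel i j by apply/negP => c; move: N; rewrite c ej.
have key : forall i j : 'I_n, i < j -> e (f i) (f j) -> ~~ Cr_rel i j -> False.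
  move=> i1 j1 ij E1 C1.
  have j1s : j1 < size s := ltn_ord j1.
  have h1 : nat_of_ord j1 != i1.+1.
    apply: contraNneq C1 => E2; rewrite /Cr_rel -E2 modn_small ?eqxx //.
  have h2 : (nat_of_ord i1 == 0) && (nat_of_ord j1 == (size s).-1) = false.
    apply/negP => /andP[/eqP h1' /eqP h2']; move: C1; rewrite /Cr_rel h1' h2'.
    by rewrite prednK ?modnn ?eqxx ?orbT.
  exact: (chord_at U C ij j1s h1 h2 E1).
have [lt|gt|eq] := ltngtP i j.
- exact: key lt ej cj.
- by apply: (key j i gt); rewrite 1?esym // /Cr_rel orbC.
- have E : i = j by apply: val_inj.
  by move: ej; rewrite E eirr.
Qed.
End Cyc.

Section Dist.
Variables (T : finType) (e : rel T).
Hypothesis esym : symmetric e.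
Hypothesis conn : forall x y, connect e x y.

Fixpoint reach (x : T) n : {set T} :=
  if n is m.+1 then reach x m :|: [set z | [exists y in reach x m, e y z]] else [set x].

Lemma reach_mono x m n : m <= n -> reach x m \subset reach x n.
Proof.
elim: n => [|n IH]; first by rewrite leqn0 => /eqP ->.
rewrite leq_eqVlt => /orP[/eqP ->//|]; rewrite ltnS => /IH H.
by apply: subset_trans H _; apply: subsetUl.
Qed.

Lemma reach_edge x n y z : y \in reach x n -> e y z -> z \in reach x n.+1.
Proof. by move=> yr eyz; rewrite /= !inE; apply/orP; right; apply/existsP; exists y; rewrite yr. Qed.

Lemma reach_path x p : path e x p -> last x p \in reach x (size p).
Proof.
elim/last_ind: p => [|q z IH]; first by rewrite /= inE.
rewrite rcons_path last_rcons size_rcons => /andP[/IH H ez].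
exact: reach_edge H ez.
Qed.

Lemma reach_conn x y : exists n, y \in reach x n.
Proof.
case/connectP: (conn x y) => p pp ->; exists (size p); exact: reach_path.
Qed.

Definition dist x y := ex_minn (reach_conn x y).

Lemma dist_reach x y : y \in reach x (dist x y).
Proof. by rewrite /dist; case: ex_minnP. Qed.

Lemma dist_min x y n : y \in reach x n -> dist x y <= n.
Proof. by rewrite /dist; case: ex_minnP => m _ H /H. Qed.

Lemma reach_dist x y n : (y \in reach x n) = (dist x y <= n).
Proof.
apply/idP/idP; first exact: dist_min.
by move=> H; apply: (subsetP (reach_mono x H)); apply: dist_reach.
Qed.

Lemma dist0 x y : (dist x y == 0) = (y == x).
Proof. by rewrite -leqn0 -reach_dist inE. Qed.

Lemma dist_xx x : dist x x = 0.
Proof. by apply/eqP; rewrite dist0. Qed.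

Lemma dist_edge x y z : e y z -> dist x z <= (dist x y).+1.
Proof. by move=> eyz; rewrite -reach_dist; apply: reach_edge eyz; apply: dist_reach. Qed.

Lemma dist_par x z n : dist x z = n.+1 -> exists2 y, e y z & dist x y = n.
Proof.
move=> dz; have := dist_reach x z; rewrite dz /= !inE reach_dist dz ltnn /=.
case/existsP => y /andP[]; rewrite reach_dist => yn eyz; exists y => //.
apply/eqP; rewrite eqn_leq yn /=; have := dist_edge x eyz; rewrite dz ltnS //.
Qed.

Lemma pot_bound (f : T -> int) : (forall u v, e u v -> (f v <= f u + 1)%R) ->
  forall x y, (f y <= f x + (dist x y)%:Z)%R.
Proof.
move=> H x y.
suff G : forall n y, y \in reach x n -> (f y <= f x + n%:Z)%R by apply/G/dist_reach.
elim=> [|n IH] {}y /=; first by rewrite inE => /eqP ->; lia.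
rewrite !inE => /orP[/IH|]; first by lia.
case/existsP => w /andP[/IH wr ewy]; have := H _ _ ewy; lia.
Qed.

End Dist.

Definition o7 (n : nat) (H : (n < 7)%N) : 'I_7 := Ordinal H.
Definition o6 (n : nat) (H : (n < 6)%N) : 'I_6 := Ordinal H.

Lemma ord7_cases (P : 'I_7 -> Prop) : P (o7 (n:=0) isT) -> P (o7 (n:=1) isT) ->
  P (o7 (n:=2) isT) -> P (o7 (n:=3) isT) -> P (o7 (n:=4) isT) -> P (o7 (n:=5) isT) ->
  P (o7 (n:=6) isT) -> forall x, P x.
Proof.
move=> p0 p1 p2 p3 p4 p5 p6 [[|[|[|[|[|[|[|n]]]]]]] H] //;
  by rewrite (eq_irrelevance H isT).
Qed.
Lemma ord6_cases (P : 'I_6 -> Prop) : P (o6 (n:=0) isT) -> P (o6 (n:=1) isT) ->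
  P (o6 (n:=2) isT) -> P (o6 (n:=3) isT) -> P (o6 (n:=4) isT) -> P (o6 (n:=5) isT) ->
  forall x, P x.
Proof.
move=> p0 p1 p2 p3 p4 p5 [[|[|[|[|[|[|n]]]]]] H] //;
  by rewrite (eq_irrelevance H isT).
Qed.

Lemma M2_rows (i j : 'I_7) : (forall k, M2_rel i k = M2_rel j k) -> i = j.
Proof.
move: i; apply: ord7_cases; move: j; apply: ord7_cases => R //; exfalso;
first [ discriminate (R (o7 (n:=0) isT)) | discriminate (R (o7 (n:=1) isT))
      | discriminate (R (o7 (n:=2) isT)) | discriminate (R (o7 (n:=3) isT))
      | discriminate (R (o7 (n:=4) isT)) | discriminate (R (o7 (n:=5) isT))
      | discriminate (R (o7 (n:=6) isT)) ].
Qed.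

Lemma M3_rows (i j : 'I_6) : (forall k, M3_rel i k = M3_rel j k) -> i = j.
Proof.
move: i; apply: ord6_cases; move: j; apply: ord6_cases => R //; exfalso;
first [ discriminate (R (o6 (n:=0) isT)) | discriminate (R (o6 (n:=1) isT))
      | discriminate (R (o6 (n:=2) isT)) | discriminate (R (o6 (n:=3) isT))
      | discriminate (R (o6 (n:=4) isT)) | discriminate (R (o6 (n:=5) isT)) ].
Qed.

Section Embed.
Variables (T : finType) (e : rel T).
Hypothesis esym : symmetric e.
Hypothesis eirr : irreflexive e.

Lemma M2_embed v0 v1 v2 v3 v4 v5 v6 :
  e v0 v1 -> e v0 v2 -> e v0 v3 -> e v1 v4 -> e v2 v5 -> e v3 v6 ->
  ~~ e v0 v4 -> ~~ e v0 v5 -> ~~ e v0 v6 -> ~~ e v1 v2 -> ~~ e v1 v3 -> ~~ e v1 v5 ->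
  ~~ e v1 v6 -> ~~ e v2 v3 -> ~~ e v2 v4 -> ~~ e v2 v6 -> ~~ e v3 v4 -> ~~ e v3 v5 ->
  ~~ e v4 v5 -> ~~ e v4 v6 -> ~~ e v5 v6 -> induced_sub M2_rel e.
Proof.
move=> h01 h02 h03 h14 h25 h36 n04 n05 n06 n12 n13 n15 n16 n23 n24 n26 n34 n35 n45 n46 n56.
pose f (i : 'I_7) := nth v0 [:: v0; v1; v2; v3; v4; v5; v6] i.
have A : forall i j, e (f i) (f j) = M2_rel i j.
  move=> i j; move: i; apply: ord7_cases; move: j; apply: ord7_cases; rewrite /f /=;
  rewrite ?eirr ?h01 ?h02 ?h03 ?h14 ?h25 ?h36 ?(negbTE n04) ?(negbTE n05) ?(negbTE n06)
    ?(negbTE n12) ?(negbTE n13) ?(negbTE n15) ?(negbTE n16) ?(negbTE n23) ?(negbTE n24)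
    ?(negbTE n26) ?(negbTE n34) ?(negbTE n35) ?(negbTE n45) ?(negbTE n46) ?(negbTE n56) //;
  rewrite esym ?h01 ?h02 ?h03 ?h14 ?h25 ?h36 ?(negbTE n04) ?(negbTE n05) ?(negbTE n06)
    ?(negbTE n12) ?(negbTE n13) ?(negbTE n15) ?(negbTE n16) ?(negbTE n23) ?(negbTE n24)
    ?(negbTE n26) ?(negbTE n34) ?(negbTE n35) ?(negbTE n45) ?(negbTE n46) ?(negbTE n56) //.
exists f; split => // i j E; apply: M2_rows => k; by rewrite -!A E.
Qed.

Lemma M3_embed v0 v1 v2 v3 v4 v5 :
  e v0 v1 -> e v0 v2 -> e v1 v2 -> e v0 v3 -> e v1 v4 -> e v2 v5 ->
  ~~ e v0 v4 -> ~~ e v0 v5 -> ~~ e v1 v3 -> ~~ e v1 v5 -> ~~ e v2 v3 -> ~~ e v2 v4 ->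
  ~~ e v3 v4 -> ~~ e v3 v5 -> ~~ e v4 v5 -> induced_sub M3_rel e.
Proof.
move=> h01 h02 h12 h03 h14 h25 n04 n05 n13 n15 n23 n24 n34 n35 n45.
pose f (i : 'I_6) := nth v0 [:: v0; v1; v2; v3; v4; v5] i.
have A : forall i j, e (f i) (f j) = M3_rel i j.
  move=> i j; move: i; apply: ord6_cases; move: j; apply: ord6_cases; rewrite /f /=;
  rewrite ?eirr ?h01 ?h02 ?h12 ?h03 ?h14 ?h25 ?(negbTE n04) ?(negbTE n05)
    ?(negbTE n13) ?(negbTE n15) ?(negbTE n23) ?(negbTE n24)
    ?(negbTE n34) ?(negbTE n35) ?(negbTE n45) //;
  rewrite esym ?h01 ?h02 ?h12 ?h03 ?h14 ?h25 ?(negbTE n04) ?(negbTE n05)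
    ?(negbTE n13) ?(negbTE n15) ?(negbTE n23) ?(negbTE n24)
    ?(negbTE n34) ?(negbTE n35) ?(negbTE n45) //.
exists f; split => // i j E; apply: M3_rows => k; by rewrite -!A E.
Qed.
End Embed.

Section BFS.
Variables (T : finType) (e : rel T).
Hypothesis esym : symmetric e.
Hypothesis eirr : irreflexive e.
Hypothesis conn : forall x y, connect e x y.
Hypothesis ecact : forall s1 s2 : seq T, simple_cycle e s1 -> simple_cycle e s2 ->
      cycle_edges s1 != cycle_edges s2 ->
      #|[set x | (x \in s1) && (x \in s2)]| <= 1.
Hypothesis noC : forall r, 4 <= r -> ~ induced_sub (Cr_rel (r:=r)) e.
Variable a : T.

Definition lay x := dist conn a x.
Definition par x := odflt x [pick y | e y x && (lay y == (lay x).-1)].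

Lemma par_spec x : 0 < lay x -> e (par x) x /\ lay (par x) = (lay x).-1.
Proof.
move=> lx; rewrite /par; case: pickP => [y /andP[eyx /eqP ly]|] //=.
case: (@dist_par _ _ conn a x (lay x).-1); first by rewrite /lay prednK.
by move=> y eyx dy /(_ y); rewrite eyx /lay dy eqxx.
Qed.

Lemma lay_edge u v : e u v -> lay v <= (lay u).+1.
Proof. exact: dist_edge. Qed.

Lemma lay0 x : lay x = 0 -> x = a.
Proof. by move/eqP; rewrite /lay dist0 => /eqP. Qed.

Lemma lay_a : lay a = 0.
Proof. exact: dist_xx. Qed.

Definition it k x := iter k par x.

Lemma lay_it k x : k <= lay x -> lay (it k x) = lay x - k.
Proof.
elim: k => [|k IH] lk; first by rewrite subn0.
rewrite /it iterS -/(it k x).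
have lk' : 0 < lay (it k x) by rewrite IH; lia.
by rewrite (par_spec lk').2 IH; lia.
Qed.

Lemma it_lay x : it (lay x) x = a.
Proof. by apply: lay0; rewrite lay_it // subnn. Qed.

Lemma it_edge k x : k < lay x -> e (it k.+1 x) (it k x).
Proof. by move=> lk; rewrite /it iterS; apply: (par_spec _).1; rewrite lay_it; lia. Qed.

Lemma itS k x : it k.+1 x = it k (par x).
Proof. by rewrite /it iterSr. Qed.

Fixpoint chain (u : T) k := if k is k'.+1 then u :: chain (par u) k' else [:: u].

Lemma size_chain u k : size (chain u k) = k.+1.
Proof. by elim: k u => //= k IH u; rewrite IH. Qed.

Lemma mem_chain u k y : y \in chain u k -> exists2 i, i <= k & y = it i u.
Proof.
elim: k u => [|k IH] u /=; first by rewrite inE => /eqP ->; exists 0.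
rewrite inE => /orP[/eqP ->|/IH [i ik ->]]; first by exists 0.
by exists i.+1 => //; rewrite itS.
Qed.

Lemma head_chain u k : head u (chain u k) = u.
Proof. by case: k. Qed.

Lemma path_chain u k : k <= lay u -> path e u (behead (chain u k)).
Proof.
elim: k u => [|k IH] u //= lk.
case: k IH lk => [|k] IH lk /=; first by rewrite andbT esym; apply: (par_spec _).1; lia.
have [epu lpu] := par_spec (x := u) (ltac:(lia)).
rewrite esym epu /=; have := IH (par u); rewrite lpu /= => /(_ ltac:(lia)) //.
Qed.

Lemma path_rev_chain v j : j < lay v -> path e (it j.+1 v) (rev (chain v j)).
Proof.
elim: j v => [|j IH] v lj; first by rewrite /= andbT; exact: (it_edge (k := 0)).
have [epv lpv] := par_spec (x := v) (ltac:(lia)).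
have -> : chain v j.+1 = v :: chain (par v) j by [].
rewrite rev_cons rcons_path itS IH ?lpv /=; last by lia.
have -> : last (it j.+1 (par v)) (rev (chain (par v) j)) = par v.
  by case: j {IH lj} => [|j] //=; rewrite rev_cons last_rcons.
by [].
Qed.

Lemma last_chain u k x0 : last x0 (chain u k) = it k u.
Proof.
elim: k u x0 => [|k IH] u x0; first by [].
transitivity (last u (chain (par u) k)); first by [].
by rewrite IH itS.
Qed.

Lemma uniq_chain u k : k <= lay u -> uniq (chain u k).
Proof.
elim: k u => [|k IH] u //= lk.
have [_ lpu] := par_spec (x := u) (ltac:(lia)).
rewrite IH ?lpu ?andbT; last by lia.
apply/negP => /mem_chain [i ik E].
have := lay_it (k := i) (x := par u); rewrite -E lpu => /(_ ltac:(lia)); lia.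
Qed.

Lemma lay_chain u k y : k <= lay u -> y \in chain u k -> exists2 i, i <= k & lay y = lay u - i /\ y = it i u.
Proof. by move=> lk /mem_chain [i ik ->]; exists i => //; rewrite lay_it //; lia. Qed.


Lemma chain_cons u k : chain u k = u :: behead (chain u k).
Proof. by case: k. Qed.

Lemma lca_cycle u v X k : u != v -> lay u = lay v -> path e v (rcons X u) ->
  all (fun x => lay u < lay x) X -> uniq X -> it k u = it k v ->
  (forall i, i < k -> it i u != it i v) -> 2 * k + size X <= 2.
Proof.
move=> nuv luv pX aX uX Ek mink.
have k1 : 0 < k.
  case: k Ek mink => // Ek _; have E : u = v := Ek; by rewrite E eqxx in nuv.
have kL : k <= lay u.
  rewrite leqNgt; apply/negP => /mink; rewrite it_lay luv it_lay eqxx //.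
have kv : k.-1 <= lay v by rewrite -luv; apply: leq_trans (leq_pred k) kL.
set s := X ++ chain u k ++ rev (chain v k.-1).
have U : uniq s.
  rewrite /s cat_uniq uX /= cat_uniq rev_uniq uniq_chain // uniq_chain //.
  rewrite andbT; apply/andP; split.
    apply/hasPn => y; rewrite mem_cat mem_rev => H; apply/negP => yX.
    move/allP: aX => /(_ y yX); case/orP: H.
      by move=> /(lay_chain kL) [i _ [-> _]]; lia.
    by move=> /(lay_chain kv) [i _ [-> _]]; rewrite -luv; lia.
  apply/hasPn => y; rewrite mem_rev => yv; apply/negP => yu.
  have [i ik [li Ey]] := lay_chain kL yu.
  have [i' ik' [li' E]] := lay_chain kv yv.
  have ik2 : i' < k by apply: leq_ltn_trans ik' _; rewrite prednK.
  have ii : i = i' by move: li li'; rewrite -luv; lia.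
  by move: (mink i ltac:(lia)); rewrite -Ey E ii eqxx.
have C : cycle e s.
  have lst : last v s = v.
    rewrite /s !last_cat (chain_cons v) rev_cons last_rcons //.
  rewrite (cycle_path v) lst /s cat_path.
  move: pX; rewrite rcons_path => /andP[-> eXu] /=.
  rewrite (chain_cons u) /= eXu /= cat_path path_chain //=.
  have -> : last u (behead (chain u k)) = it k u.
    by rewrite -(last_chain u k u) (chain_cons u k).
  rewrite Ek; have -> : k = k.-1.+1 by lia.
  by apply: path_rev_chain; rewrite -luv; lia.
have sz : size s = size X + k.+1 + k.
  by rewrite /s !size_cat size_rev !size_chain; lia.
rewrite leqNgt; apply/negP => big.
apply: (no_long_cycle esym eirr ecact noC U C); lia.
Qed.

Lemma lca_ex u v : lay u = lay v -> exists k, it k u == it k v.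
Proof. by move=> luv; exists (lay u); rewrite it_lay luv it_lay. Qed.

Lemma lca_min u v (H : lay u = lay v) :
  exists k, [/\ it k u = it k v, forall i, i < k -> it i u != it i v & k <= lay u].
Proof.
case: (ex_minnP (lca_ex H)) => k /eqP Ek mk; exists k; split => //.
  by move=> i ik; apply/negP => /mk; lia.
by apply: mk; rewrite it_lay H it_lay.
Qed.

Lemma par_unique p x : e p x -> (lay p).+1 = lay x -> p = par x.
Proof.
move=> epx lpx; have [epar lpar] := par_spec (x := x) ltac:(lia).
apply/eqP; apply/negPn/negP => npq.
have H : lay p = lay (par x) by rewrite lpar; lia.
have [k [Ek mk _]] := lca_min H.
have pX : path e (par x) (rcons [:: x] p) by rewrite /= epar esym epx.
have aX : all (fun y => lay p < lay y) [:: x] by rewrite /= andbT; lia.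
have := lca_cycle npq H pX aX isT Ek mk; rewrite /=.
case: k Ek mk => [|k] Ek mk; last by lia.
by have E : p = par x := Ek; rewrite E eqxx in npq.
Qed.

Lemma sib_par u v : e u v -> lay u = lay v -> par u = par v.
Proof.
move=> euv H; have nuv : u != v by apply: contraTneq euv => ->; rewrite eirr.
have [k [Ek mk _]] := lca_min H.
have pX : path e v (rcons [::] u) by rewrite /= esym euv.
have := lca_cycle nuv H pX isT isT Ek mk; rewrite /= => k1.
case: k Ek mk k1 => [|[|k]] Ek mk k1; [ | exact: Ek | lia].
by have E : u = v := Ek; rewrite E eqxx in nuv.
Qed.


Lemma lay_pos u v : e u v -> lay u = lay v -> 0 < lay u.
Proof.
move=> euv luv; rewrite lt0n; apply/negP => /eqP l0.
have ua := lay0 l0; have va : v = a by apply: lay0; rewrite -luv.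
by move: euv; rewrite ua va eirr.
Qed.

Lemma gap u v : (lay u).+2 <= lay v \/ (lay v).+2 <= lay u -> ~~ e u v.
Proof.
move=> H; apply/negP => euv; have h1 := lay_edge euv.
have h2 := lay_edge (v := u) (u := v); rewrite esym in h2; have := h2 euv; lia.
Qed.

Lemma gapU u v k : lay v = k + (lay u).+2 -> ~~ e u v.
Proof. by move=> h; apply: gap; left; rewrite h leq_addl. Qed.

Lemma gapD u v k : lay u = k + (lay v).+2 -> ~~ e u v.
Proof. by move=> h; apply: gap; right; rewrite h leq_addl. Qed.

Lemma matching x y z : e x y -> e x z -> y != z -> lay x = lay y -> lay x = lay z -> False.
Proof.
move=> exy exz nyz lxy lxz.
have L := lay_pos exy lxy.
have [epx lp] := par_spec L.
have py : par y = par x by rewrite (sib_par exy lxy).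
have pz : par z = par x by rewrite (sib_par exz lxz).
have [epy _] := par_spec (x := y) ltac:(lia).
have [epz _] := par_spec (x := z) ltac:(lia).
rewrite py in epy; rewrite pz in epz.
have npx : par x != x by apply: contraTneq epx => ->; rewrite eirr.
have npy : par x != y by apply: contraTneq epy => ->; rewrite eirr.
have npz : par x != z by apply: contraTneq epz => ->; rewrite eirr.
have nxy : x != y by apply: contraTneq exy => ->; rewrite eirr.
have nxz : x != z by apply: contraTneq exz => ->; rewrite eirr.
have c1 : simple_cycle e [:: par x; x; y].
  split => //; first by rewrite /= !inE negb_or npx npy nxy.
  by rewrite /= epx exy esym epy.
have c2 : simple_cycle e [:: par x; x; z].
  split => //; first by rewrite /= !inE negb_or npx npz nxz.
  by rewrite /= epx exz esym epz.
apply: (cactus_two ecact c1 c2 (x := par x) (y := x) (a := y)) => //;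
  rewrite ?inE ?eqxx ?orbT //.
by rewrite !negb_or eq_sym npy eq_sym nxy.
Qed.

Lemma edge_cases u v : e u v ->
  [\/ lay v = (lay u).+1 /\ u = par v, lay u = (lay v).+1 /\ v = par u |
      lay u = lay v /\ par u = par v].
Proof.
move=> euv; have h1 := lay_edge euv; have evu : e v u by rewrite esym.
have h2 := lay_edge evu.
case: (ltngtP (lay u) (lay v)) => c.
- by constructor 1; split; [lia | apply: par_unique => //; lia].
- by constructor 2; split; [lia | apply: par_unique => //; lia].
- by constructor 3; split => //; apply: sib_par.
Qed.

Definition anc l x := it (lay x - l) x.

Lemma anc_lay l x : l <= lay x -> lay (anc l x) = l.
Proof. by move=> lx; rewrite /anc lay_it; lia. Qed.

Lemma anc_self x : anc (lay x) x = x.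
Proof. by rewrite /anc subnn. Qed.

Lemma anc_par l x : l < lay x -> anc l (par x) = anc l x.
Proof.
move=> lx; have [_ lp] := par_spec (x := x) ltac:(lia).
rewrite /anc lp; have -> : lay x - l = ((lay x).-1 - l).+1.
  by rewrite -subn1; lia.
by rewrite itS.
Qed.

Lemma anc_edge l u v : e u v -> l < lay u -> l < lay v -> anc l u = anc l v.
Proof.
move=> euv lu lv; case: (edge_cases euv) => [[_ ->]|[_ ->]|[_ E]].
- by rewrite anc_par.
- by rewrite anc_par.
- by rewrite -anc_par // E anc_par.
Qed.

Lemma cross l (C : pred T) u v : e u v ->
  (l <= lay u) && C (anc l u) -> ~~ ((l <= lay v) && C (anc l v)) ->
  lay u = l /\ (lay v = l.-1 \/ [/\ lay v = l, C u & ~~ C v]).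
Proof.
move=> euv /andP[lu Cu] nSv.
have [lul|lug] := leqP (lay u) l.
  have lue : lay u = l by lia.
  split => //.
  case: (edge_cases euv) => [[lv E]|[lv E]|[lv E]].
  - exfalso; have lvl : l < lay v by lia.
    by move: nSv; rewrite (ltnW lvl) /= -(anc_par lvl) -E Cu.
  - by left; rewrite -lue lv.
  - right; split => //; first by rewrite -lv.
      by move: Cu; rewrite -lue anc_self.
    have lve : lay v = l by lia.
    by move: nSv; rewrite lve leqnn /= -{1}lve anc_self.
exfalso.
case: (edge_cases euv) => [[lv E]|[lv E]|[lv E]].
- move: nSv; rewrite lv; have -> : l <= (lay u).+1 by lia.
  by rewrite /= -(anc_edge euv) ?Cu //; lia.
- have [lvl|lvg] := leqP (lay v) l.
    have lve : lay v = l by lia.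
    have A1 : anc l u = v by rewrite -(anc_par lug) -E -lve anc_self.
    have A2 : anc l v = v by rewrite -{1}lve anc_self.
    by move: nSv; rewrite lve leqnn /= A2 -{1}A1 Cu.
  by move: nSv; rewrite (ltnW lvg) /= -(anc_edge euv) ?Cu.
- by move: nSv; rewrite -lv (ltnW lug) /= -(anc_edge euv) ?Cu //; rewrite -lv.
Qed.


Hypothesis noM2 : ~ induced_sub M2_rel e.
Hypothesis noM3 : ~ induced_sub M3_rel e.
Variable b : T.
Hypothesis ecc_hyp : forall g y, dist conn g y <= lay b.

Lemma pot_contra (S : pred T) (K : int) g : S g -> ~~ S b -> (K < (lay g)%:Z)%R ->
  (forall u v, e u v -> S u -> ~~ S v ->
     (K - 1 <= (lay u)%:Z + (lay v)%:Z)%R /\ ((lay u)%:Z + (lay v)%:Z <= K + 1)%R) ->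
  False.
Proof.
move=> Sg Sb Kg H.
pose f (z : T) : int := if S z then (K - (lay z)%:Z)%R else ((lay z)%:Z)%R.
have Hf : forall u v, e u v -> (f v <= f u + 1)%R.
  move=> u v euv; have h1 := lay_edge euv.
  have evu : e v u by rewrite esym.
  have h2 := lay_edge evu.
  rewrite /f; case Su: (S u); case Sv: (S v).
  - lia.
  - by have [] := H u v euv Su (negbT Sv); lia.
  - by have [] := H v u evu Sv (negbT Su); lia.
  - lia.
have := pot_bound conn Hf g b; rewrite /f Sg (negbTE Sb).
have := ecc_hyp g b; lia.
Qed.

Lemma lay_par x : 0 < lay x -> (lay (par x)).+1 = lay x.
Proof. by move=> lx; rewrite (par_spec lx).2 prednK. Qed.

Lemma arD (lu lv : nat) : lu = 1 -> lv <= 1 ->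
  ((1:int) - 1 <= lu%:Z + lv%:Z)%R /\ (lu%:Z + lv%:Z <= 1 + 1)%R.
Proof. lia. Qed.

Lemma arC (lw lu lv : nat) : lu = lw.+1 -> lv = lw ->
  (2 * lw%:Z - 1 <= lu%:Z + lv%:Z)%R /\ (lu%:Z + lv%:Z <= 2 * lw%:Z + 1)%R.
Proof. lia. Qed.

Lemma arC2 (lw : nat) : lw <= 1 -> (2 * lw%:Z < (lw.+2)%:Z)%R.
Proof. lia. Qed.

Lemma subn_pred n : 0 < n -> n - n.-1 = 1.
Proof. by case: n => // n _; rewrite /= subSnn. Qed.

Lemma unique_branch x y x' y' : x != y -> lay x = lay y -> e x x' -> lay x' = (lay x).+1 ->
  e y y' -> lay y' = (lay y).+1 -> False.
Proof.
move=> nxy lxy exx' lx' eyy' ly'.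
have px : x = par x' := par_unique exx' (Logic.eq_sym lx').
have py : y = par y' := par_unique eyy' (Logic.eq_sym ly').
have [k [Ek mk kL]] := lca_min lxy.
case: k Ek mk kL => [|j] Ek mk kL; first by have E : x = y := Ek; rewrite E eqxx in nxy.
set w := it j.+1 x. set c1 := it j x. set c2 := it j y. set g1 := it j x'. set g2 := it j y'.
have pc1 : par c1 = w by [].
have pc2 : par c2 = w by rewrite /w Ek.
have pg1 : par g1 = c1 by rewrite /g1 -[par _]/(it j.+1 x') itS -px.
have pg2 : par g2 = c2 by rewrite /g2 -[par _]/(it j.+1 y') itS -py.
have hw : lay w = lay x - j.+1 := lay_it kL.
have lc1 : lay c1 = (lay w).+1.
  have h1 : lay c1 = lay x - j := lay_it (k:=j) (x:=x) ltac:(lia).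
  by rewrite h1 hw; lia.
have lc2 : lay c2 = (lay w).+1.
  have h1 : lay c2 = lay y - j := lay_it (k:=j) (x:=y) ltac:(lia).
  by rewrite h1 hw -lxy; lia.
have lg1 : lay g1 = (lay w).+2.
  have h1 : lay g1 = lay x' - j := lay_it (k:=j) (x:=x') ltac:(lia).
  by rewrite h1 hw lx'; lia.
have lg2 : lay g2 = (lay w).+2.
  have h1 : lay g2 = lay y' - j := lay_it (k:=j) (x:=y') ltac:(lia).
  by rewrite h1 hw ly' -lxy; lia.
clear hw kL.
have ewc1 : e w c1 by rewrite -pc1; apply: (par_spec _).1; lia.
have ewc2 : e w c2 by rewrite -pc2; apply: (par_spec _).1; lia.
have ec1g1 : e c1 g1 by rewrite -pg1; apply: (par_spec _).1; lia.
have ec2g2 : e c2 g2 by rewrite -pg2; apply: (par_spec _).1; lia.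
have nc12 : c1 != c2 := mk j (ltnSn j).
have ng12 : ~~ e g1 g2.
  have l12 : lay g1 = lay g2 by rewrite lg1 lg2.
  apply/negP => E; have := sib_par E l12; rewrite pg1 pg2 => E'.
  by rewrite E' eqxx in nc12.
have nc1g2 : ~~ e c1 g2.
  have l12 : (lay c1).+1 = lay g2 by rewrite lc1 lg2.
  apply/negP => E; have := par_unique E l12; rewrite pg2 => E'.
  by rewrite E' eqxx in nc12.
have nc2g1 : ~~ e c2 g1.
  have l12 : (lay c2).+1 = lay g1 by rewrite lc2 lg1.
  apply/negP => E; have := par_unique E l12; rewrite pg1 => E'.
  by rewrite E' eqxx in nc12.
case: (boolP (e c1 c2)) => ec12.
- have [lw0|lwp] := posnP (lay w).
  +
    pose S (c : T) := fun z => (lay c <= lay z) && pred1 c (anc (lay c) z).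
    have Sg : forall c g, par g = c -> 0 < lay g -> S c g.
      move=> c g pg lg; have [_ lp] := par_spec lg.
      rewrite /S /= -pg lp leq_pred /= /anc.
      by rewrite subn_pred.
    have SD : ~~ S c1 b || ~~ S c2 b.
      rewrite -negb_and; apply/negP => /andP[/andP[_ /eqP A1] /andP[_ /eqP A2]].
      by move: A1 A2; rewrite lc1 lc2 => -> E; rewrite E eqxx in nc12.
    have crossD : forall c, lay c = 1 -> forall u v, e u v -> S c u -> ~~ S c v ->
        (1 - 1 <= (lay u)%:Z + (lay v)%:Z)%R /\ ((lay u)%:Z + (lay v)%:Z <= 1 + 1)%R.
      move=> c lc u v euv Su nSv.
      have [lu [lv|[lv _ _]]] := cross (l := lay c) (C := pred1 c) euv Su nSv;
        apply: arD; rewrite ?lu ?lv ?lc //.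
    case/orP: SD => nS.
    * apply: (pot_contra (S := S c1) (K := 1) (g := g1) _ nS) => //.
      -- by apply: Sg => //; rewrite lg1.
      -- by rewrite lg1 lw0.
      -- by apply: crossD; rewrite lc1 lw0.
    * apply: (pot_contra (S := S c2) (K := 1) (g := g2) _ nS) => //.
      -- by apply: Sg => //; rewrite lg2.
      -- by rewrite lg2 lw0.
      -- by apply: crossD; rewrite lc2 lw0.
  +
    have [epw _] := par_spec lwp; have lpw := lay_par lwp.
    have ewp : e w (par w) by rewrite esym.
    apply: noM3; apply: (M3_embed esym eirr (v0 := w) (v1 := c1) (v2 := c2) (v3 := par w)
      (v4 := g1) (v5 := g2) ewc1 ewc2 ec12 ewp ec1g1 ec2g2).
    * by apply: (gapU (k := 0)); rewrite lg1.
    * by apply: (gapU (k := 0)); rewrite lg2.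
    * by apply: (gapD (k := 0)); rewrite lc1 -lpw.
    * exact: nc1g2.
    * by apply: (gapD (k := 0)); rewrite lc2 -lpw.
    * exact: nc2g1.
    * by apply: (gapU (k := 1)); rewrite lg1 -lpw.
    * by apply: (gapU (k := 1)); rewrite lg2 -lpw.
    * exact: ng12.
- have [lwl|lwg] := leqP (lay w) 1.
  +
    pose C (c : T) := fun z => (z == c) || (e c z && (lay z == lay c)).
    pose S (c : T) := fun z => (lay c <= lay z) && C c (anc (lay c) z).
    have Sg : forall c g, par g = c -> 0 < lay g -> S c g.
      move=> c g pg lg; have [_ lp] := par_spec lg.
      rewrite /S /= -pg lp leq_pred /= /anc /C.
      by rewrite subn_pred // eqxx.
    have SD : ~~ S c1 b || ~~ S c2 b.
      rewrite -negb_and; apply/negP => /andP[/andP[_ A1] /andP[_ A2]].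
      move: A1 A2; rewrite lc1 lc2 /C; set m := anc _ b.
      case/orP => [/eqP E1|/andP[e1 /eqP l1]]; case/orP => [/eqP E2|/andP[e2 /eqP l2]].
      * by rewrite -E1 -E2 eqxx in nc12.
      * by move: e2; rewrite E1 esym (negbTE ec12).
      * by move: e1; rewrite E2 (negbTE ec12).
      * apply: (matching (x := m) (y := c1) (z := c2)) => //; rewrite ?(esym m) //; lia.
    have crossC : forall c, lay c = (lay w).+1 -> forall u v, e u v -> S c u -> ~~ S c v ->
        (2 * (lay w)%:Z - 1 <= (lay u)%:Z + (lay v)%:Z)%R /\
        ((lay u)%:Z + (lay v)%:Z <= 2 * (lay w)%:Z + 1)%R.
      move=> c lc u v euv Su nSv.
      have [lu [lv|[lv Cu nCv]]] := cross (l := lay c) (C := C c) euv Su nSv.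
        by apply: arC; rewrite ?lu ?lv ?lc.
      exfalso; move: Cu nCv; rewrite /C; case/orP => [/eqP uc|/andP[ecu /eqP luc]].
        by rewrite -uc euv lv lu eqxx orbT.
      rewrite negb_or => /andP[nvc _].
      apply: (matching (x := u) (y := c) (z := v)) => //; first by rewrite esym.
        by rewrite eq_sym.
      by rewrite lv.
    case/orP: SD => nS.
    * apply: (pot_contra (S := S c1) (K := 2 * (lay w)%:Z) (g := g1) _ nS) => //.
      -- by apply: Sg => //; rewrite lg1.
      -- by rewrite lg1; apply: arC2.
      -- by apply: crossC; rewrite lc1.
    * apply: (pot_contra (S := S c2) (K := 2 * (lay w)%:Z) (g := g2) _ nS) => //.
      -- by apply: Sg => //; rewrite lg2.
      -- by rewrite lg2; apply: arC2.
      -- by apply: crossC; rewrite lc2.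
  +
    have lwp : 0 < lay w := ltnW lwg.
    have [epw _] := par_spec lwp; have lpw := lay_par lwp.
    have lpp : 0 < lay (par w) by rewrite -ltnS lpw.
    have [epp _] := par_spec lpp; have lppw := lay_par lpp.
    have ewp : e w (par w) by rewrite esym.
    have epp' : e (par w) (par (par w)) by rewrite esym.
    apply: noM2; apply: (M2_embed esym eirr (v0 := w) (v1 := c1) (v2 := c2) (v3 := par w)
      (v4 := g1) (v5 := g2) (v6 := par (par w)) ewc1 ewc2 ewp ec1g1 ec2g2 epp').
    * by apply: (gapU (k := 0)); rewrite lg1.
    * by apply: (gapU (k := 0)); rewrite lg2.
    * by apply: (gapD (k := 0)); rewrite -lpw -lppw.
    * exact: ec12.
    * by apply: (gapD (k := 0)); rewrite lc1 -lpw.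
    * exact: nc1g2.
    * by apply: (gapD (k := 1)); rewrite lc1 -lpw -lppw.
    * by apply: (gapD (k := 0)); rewrite lc2 -lpw.
    * exact: nc2g1.
    * by apply: (gapD (k := 1)); rewrite lc2 -lpw -lppw.
    * by apply: (gapU (k := 1)); rewrite lg1 -lpw.
    * by apply: (gapU (k := 1)); rewrite lg2 -lpw.
    * exact: ng12.
    * by apply: (gapD (k := 2)); rewrite lg1 -lpw -lppw.
    * by apply: (gapD (k := 2)); rewrite lg2 -lpw -lppw.
Qed.


Definition hc x := [exists y, e x y && (lay y == (lay x).+1)].

Lemma hc_unique x y : hc x -> hc y -> lay x = lay y -> x = y.
Proof.
case/existsP => x' /andP[ex /eqP lx]; case/existsP => y' /andP[ey /eqP ly] lxy.
apply/eqP; apply/negPn/negP => nxy; exact: (unique_branch nxy lxy ex lx ey ly).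
Qed.

Lemma hc_par j : 0 < lay j -> hc (par j).
Proof.
move=> lj; have [epj lpj] := par_spec lj; apply/existsP; exists j.
by rewrite epj /= lay_par.
Qed.

Definition mate x y := e x y && (lay y == lay x).

Lemma mate_sym x y : mate x y = mate y x.
Proof. by rewrite /mate esym eq_sym. Qed.

Lemma mate_unique x y z : mate x y -> mate x z -> y = z.
Proof.
case/andP => exy /eqP lxy /andP[exz /eqP lxz]; apply/eqP; apply/negPn/negP => nyz.
exact: (matching exy exz nyz (Logic.eq_sym lxy) (Logic.eq_sym lxz)).
Qed.

Definition special x := hc x || [exists y, mate x y && hc y].

Definition NN := #|T|.
Definition rk (x : T) : nat := enum_rank x.
Definition grp x := if special x then NN
  else if [pick y | mate x y] is Some y then minn (rk x) (rk y) else rk x.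
Definition pos x := (lay x * NN.+1 + grp x) * NN.+1 + rk x.

Lemma rk_lt x : rk x < NN.
Proof. by rewrite /rk /NN; case: (enum_rank x). Qed.

Lemma rk_inj : injective rk.
Proof. by move=> x y /val_inj /enum_rank_inj. Qed.

Lemma grp_le x : grp x <= NN.
Proof.
rewrite /grp; case: ifP => // _; case: pickP => [y _|_]; last exact: ltnW (rk_lt x).
by apply: leq_trans (geq_minl _ _) (ltnW (rk_lt x)).
Qed.

Lemma grp_lt x : ~~ special x -> grp x < NN.
Proof.
move=> ns; rewrite /grp (negbTE ns); case: pickP => [y _|_]; last exact: rk_lt.
by apply: leq_ltn_trans (geq_minl _ _) (rk_lt x).
Qed.

Lemma lex2 M a1 r a' r' : r < M -> r' < M -> a1 * M + r < a' * M + r' ->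
  a1 < a' \/ (a1 = a' /\ r < r').
Proof.
move=> hr hr' H; case: (ltngtP a1 a') => [h|h|h]; [by left| |by right; split => //; subst; lia].
exfalso; have : a'.+1 * M <= a1 * M := leq_mul h (leqnn M).
rewrite mulSn; lia.
Qed.

Lemma lex2eq M a1 r a' r' : r < M -> r' < M -> a1 * M + r = a' * M + r' -> a1 = a' /\ r = r'.
Proof.
move=> hr hr' H.
have E1 : (a1 * M + r) %/ M = a1 by rewrite divnMDl ?divn_small ?addn0 //; lia.
have E2 : (a' * M + r') %/ M = a' by rewrite divnMDl ?divn_small ?addn0 //; lia.
have E3 : (a1 * M + r) %% M = r by rewrite modnMDl modn_small.
have E4 : (a' * M + r') %% M = r' by rewrite modnMDl modn_small.
by split; [rewrite -E1 -E2 H | rewrite -E3 -E4 H].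
Qed.

Lemma hgN x : grp x < NN.+1.
Proof. by rewrite ltnS grp_le. Qed.

Lemma hrN x : rk x < NN.+1.
Proof. by rewrite ltnS ltnW // rk_lt. Qed.

Lemma pos_lt x y : pos x < pos y ->
  lay x < lay y \/ (lay x = lay y /\ (grp x < grp y \/ (grp x = grp y /\ rk x < rk y))).
Proof.
move=> H; case: (lex2 (hrN x) (hrN y) H) => [h|[h1 h2]].
  case: (lex2 (hgN x) (hgN y) h) => [h'|[h1' h2']]; [by left | by right; split => //; left].
have [l1 g1] := lex2eq (hgN x) (hgN y) h1.
by right; split => //; right.
Qed.

Lemma pos_inj : injective pos.
Proof.
move=> x y H; apply: rk_inj.
by have [_ ->] := lex2eq (hrN x) (hrN y) H.
Qed.

Lemma special_mate i k : mate i k -> special i = hc i || hc k.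
Proof.
move=> mik; rewrite /special; congr (_ || _); apply/existsP/idP => [[y /andP[miy hy]]|hk].
  by rewrite (mate_unique mik miy).
by exists k; rewrite mik.
Qed.

Lemma grp_mate i k : mate i k -> grp i = grp k.
Proof.
move=> mik; have mki : mate k i by rewrite mate_sym.
rewrite /grp (special_mate mik) (special_mate mki) orbC; case: ifP => // _.
case: pickP => [y miy|/(_ k)]; last by rewrite mik.
case: pickP => [z mkz|/(_ i)]; last by rewrite mki.
by rewrite -(mate_unique mik miy) -(mate_unique mki mkz) minnC.
Qed.

Lemma umb i j k : pos i < pos j -> pos j < pos k -> e i k -> e i j.
Proof.
move=> ij jk eik.
have nij : i != j by apply: contraTneq ij => ->; rewrite ltnn.
have njk : j != k by apply: contraTneq jk => ->; rewrite ltnn.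
have nik : i != k by apply: contraTneq (ltn_trans ij jk) => ->; rewrite ltnn.
have pij := pos_lt ij; have pjk := pos_lt jk; have pik := pos_lt (ltn_trans ij jk).
case: (edge_cases eik) => [[lk ik]|[li ki]|[lik pik']].
-
  have hi : hc i by apply/existsP; exists k; rewrite eik lk eqxx.
  have si : special i by rewrite /special hi.
  have [ljk|ljk] : lay j = lay k \/ lay j = lay i.
    case: pij => [h|[h _]]; case: pjk => [h'|[h' _]]; lia.
  + have lj : 0 < lay j by rewrite ljk lk.
    have pj : par j = i.
      by apply: hc_unique (hc_par lj) hi _; apply: succn_inj; rewrite lay_par // ljk lk.
    by rewrite -pj; exact: (par_spec lj).1.
  + have gi : grp i = NN by rewrite /grp si.
    have gj : grp j = NN.
      case: pij => [h|[_ [h|[h _]]]]; [lia | | by rewrite -h].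
      by have := grp_le j; lia.
    have sj : special j by apply: contraT => /grp_lt; rewrite gj ltnn.
    case/orP: sj => [hj|/existsP [y /andP[/andP[ejy /eqP ly] hy]]].
      by move: nij; rewrite (hc_unique hj hi) ?eqxx.
    have yi : y = i by apply: hc_unique hy hi _; rewrite ly ljk.
    by rewrite esym -yi.
- exfalso; case: pik => [h|[h _]]; lia.
- have mik : mate i k by rewrite /mate eik lik eqxx.
  have lj : lay j = lay i.
    case: pij => [h|[h _]]; case: pjk => [h'|[h' _]]; try lia.
  have gik := grp_mate mik.
  have gj : grp j = grp i.
    case: pij => [h|[_ [h|[h _]]]]; [lia | | by rewrite h].
    case: pjk => [h'|[_ [h'|[h' _]]]]; lia.
  case: (boolP (special i)) => si.
  + have sj : special j.
      apply: contraT => /grp_lt; rewrite gj /grp si ltnn //.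
    have [s [hs ss]] : exists s, hc s /\ (s = i \/ s = k).
      move: si; rewrite (special_mate mik) => /orP[h|h]; [by exists i; split => //; left |
        by exists k; split => //; right].
    case/orP: sj => [hj|/existsP [y /andP[mjy hy]]].
      have ljs : lay j = lay s by case: ss => ->; rewrite lj // lik.
      have := hc_unique hj hs ljs; case: ss => -> E; [by rewrite E eqxx in nij | by rewrite E eqxx in njk].
    have ly : lay y = lay s.
      by case/andP: mjy => _ /eqP ->; case: ss => ->; rewrite lj.
    have := hc_unique hy hs ly; case: ss => -> ys.
      by move: mjy; rewrite ys /mate esym => /andP[].
    exfalso; have mkj : mate k j by rewrite mate_sym -ys.
    have mki : mate k i by rewrite mate_sym.
    by move: nij; rewrite (mate_unique mki mkj) eqxx.
  + have sj : ~~ special j.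
      by apply/negP => sj; have := grp_lt si; rewrite -gj /grp sj ltnn.
    move: gj; rewrite /grp (negbTE sj) (negbTE si).
    have -> : [pick y | mate i y] = Some k.
      case: pickP => [y miy|/(_ k)]; last by rewrite mik.
      by rewrite (mate_unique mik miy).
    case: pickP => [y mjy|_] E.
      case: (leqP (rk j) (rk y)) => hjy.
        move: E; rewrite (minn_idPl hjy) => E.
        by case: (leqP (rk i) (rk k)) => h; move: E;
          rewrite ?(minn_idPl h) ?(minn_idPr (ltnW h)) => /rk_inj E; subst;
          rewrite eqxx in nij njk.
      move: E; rewrite (minn_idPr (ltnW hjy)) => E.
      case: (leqP (rk i) (rk k)) => h; move: E;
        rewrite ?(minn_idPl h) ?(minn_idPr (ltnW h)) => /rk_inj E; subst.
        by case/andP: mjy; rewrite esym.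
      exfalso; have mkj : mate k j by rewrite mate_sym.
      have mki : mate k i by rewrite mate_sym.
      by move: nij; rewrite (mate_unique mki mkj) eqxx.
    by case: (leqP (rk i) (rk k)) => h; move: E;
      rewrite ?(minn_idPl h) ?(minn_idPr (ltnW h)) => /rk_inj E; subst;
      rewrite eqxx in nij njk.
Qed.

Definition mx v := \max_(u | e v u) (pos u - pos v).

Lemma rep_lt u v : pos u < pos v -> e u v = (pos v <= pos u + mx u).
Proof.
move=> uv; apply/idP/idP => [euv|H].
  have := @leq_bigmax_cond _ (e u) (fun w => pos w - pos u) v euv.
  rewrite -/(mx u); lia.
apply/negPn/negP => neuv.
have W : forall w, e u w -> pos w - pos u <= pos v - pos u - 1.
  move=> w euw; case: (ltnP (pos w) (pos v)) => h; first by lia.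
  have nwv : w != v by apply: contraNneq neuv => <-.
  have h' : pos v < pos w.
    rewrite ltn_neqAle h andbT; apply: contra nwv => /eqP E.
    by rewrite (pos_inj E).
  by move: neuv; rewrite (umb uv h' euw).
have M : mx u <= pos v - pos u - 1 by apply/bigmax_leqP.
move: M H uv; lia.
Qed.

Lemma rep u v : u != v -> e u v = (pos u <= pos v + mx v) && (pos v <= pos u + mx u).
Proof.
move=> nuv; case: (ltngtP (pos u) (pos v)) => h.
- by rewrite (rep_lt h); have -> : pos u <= pos v + mx v by lia.
- rewrite esym (rep_lt h) andbC.
  by have -> : pos v <= pos u + mx u by lia.
- by move: nuv; rewrite (pos_inj h) eqxx.
Qed.

Definition PP v := StraightPath (Posz (pos v), Posz 0) false (mx v).+1.

Lemma B0_ord : B0 e.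
Proof.
exists PP; split => // u v nuv; rewrite (rep nuv) share_iff //.
rewrite /spline /sppos /=; split.
  by move/andP=> [h1 h2]; split => //; lia.
by case=> _ _ h1 h2; apply/andP; split; lia.
Qed.

End BFS.
Section IG.
Variables (U : finType) (h : rel U) (lo hi : U -> int).
Hypothesis lohi : forall x, (lo x <= hi x)%R.
Hypothesis hrep : forall x y, x != y -> h x y = (lo x <= hi y)%R && (lo y <= hi x)%R.

Definition ov (p q : U) := (lo p <= hi q)%R && (lo q <= hi p)%R.

Lemma h_ov p q : h p q -> ov p q.
Proof.
case: (eqVneq p q) => [->|ne]; first by rewrite /ov lohi.
by rewrite hrep.
Qed.

Lemma path_hit y s : forall x z,
  ((hi x < lo y)%R /\ (hi y < lo z)%R) \/ ((hi z < lo y)%R /\ (hi y < lo x)%R) ->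
  path ov x s -> last x s = z -> has (fun p => ov p y) s.
Proof.
elim: s => [|p s IH] x z H /=.
  move=> _ E; subst z; move: H; have := lohi x; have := lohi y; lia.
move=> /andP[oxp ps] lz.
case o: (ov p y) => //=; apply: (IH p z) => //.
move: o oxp H; rewrite /ov; have := lohi x; have := lohi y; have := lohi p; have := lohi z.
lia.
Qed.

Lemma AT_contra x y z s1 s2 s3 :
  x != y -> y != z -> x != z -> ~~ h x y -> ~~ h y z -> ~~ h x z ->
  path h x s1 -> last x s1 = z -> all (fun p => (p != y) && ~~ h p y) s1 ->
  path h y s2 -> last y s2 = z -> all (fun p => (p != x) && ~~ h p x) s2 ->
  path h x s3 -> last x s3 = y -> all (fun p => (p != z) && ~~ h p z) s3 ->
  False.
Proof.
move=> nxy nyz nxz hxy hyz hxz p1 l1 a1 p2 l2 a2 p3 l3 a3.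
have avoid w s : all (fun p => (p != w) && ~~ h p w) s -> ~~ has (fun p => ov p w) s.
  move=> /allP A; apply/hasPn => p /A /andP[pw hpw].
  by rewrite /ov -hrep.
have hp w s : path h w s -> path ov w s by apply: sub_path => a b; apply: h_ov.
move: hxy hyz hxz; rewrite !hrep // => hxy hyz hxz.
have := lohi x; have := lohi y; have := lohi z => lz ly lx.
have [c1|c1] := ltrP (hi x) (lo y).
- have [c2|c2] := ltrP (hi y) (lo z).
  + by move: (path_hit (or_introl (conj c1 c2)) (hp _ _ p1) l1); rewrite (negbTE (avoid _ _ a1)).
  + have [c3|c3] := ltrP (hi z) (lo y).
    *
      have [c4|c4] := ltrP (hi x) (lo z).
      - by move: (path_hit (y:=z) (or_introl (conj c4 c3)) (hp _ _ p3) l3); rewrite (negbTE (avoid _ _ a3)).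
      - have c5 : (hi z < lo x)%R by move: hxz; lia.
        by move: (path_hit (y:=x) (x:=y) (or_intror (conj c5 c1)) (hp _ _ p2) l2); rewrite (negbTE (avoid _ _ a2)).
    * exfalso; move: hyz; lia.
- have c6 : (hi y < lo x)%R by move: hxy; lia.
  have [c2|c2] := ltrP (hi x) (lo z).
  + by move: (path_hit (y:=x) (x:=y) (or_introl (conj c6 c2)) (hp _ _ p2) l2); rewrite (negbTE (avoid _ _ a2)).
  + have c7 : (hi z < lo x)%R by move: hxz; lia.
    have [c3|c3] := ltrP (hi z) (lo y).
    * by move: (path_hit (y:=y) (or_intror (conj c3 c6)) (hp _ _ p1) l1); rewrite (negbTE (avoid _ _ a1)).
    * have c8 : (hi y < lo z)%R by move: hyz; lia.
      by move: (path_hit (y:=z) (or_intror (conj c8 c7)) (hp _ _ p3) l3); rewrite (negbTE (avoid _ _ a3)).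
Qed.

End IG.


Lemma M2_not_interval (lo hi : 'I_7 -> int) :
  (forall x, (lo x <= hi x)%R) ->
  (forall x y, x != y -> M2_rel x y = (lo x <= hi y)%R && (lo y <= hi x)%R) -> False.
Proof.
move=> lohi hrep.
apply: (AT_contra lohi hrep (x := o7 (n:=4) isT) (y := o7 (n:=5) isT) (z := o7 (n:=6) isT)
  (s1 := [:: o7 (n:=1) isT; o7 (n:=0) isT; o7 (n:=3) isT; o7 (n:=6) isT])
  (s2 := [:: o7 (n:=2) isT; o7 (n:=0) isT; o7 (n:=3) isT; o7 (n:=6) isT])
  (s3 := [:: o7 (n:=1) isT; o7 (n:=0) isT; o7 (n:=2) isT; o7 (n:=5) isT])); by [].
Qed.

Lemma M3_not_interval (lo hi : 'I_6 -> int) :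
  (forall x, (lo x <= hi x)%R) ->
  (forall x y, x != y -> M3_rel x y = (lo x <= hi y)%R && (lo y <= hi x)%R) -> False.
Proof.
move=> lohi hrep.
apply: (AT_contra lohi hrep (x := o6 (n:=3) isT) (y := o6 (n:=4) isT) (z := o6 (n:=5) isT)
  (s1 := [:: o6 (n:=0) isT; o6 (n:=2) isT; o6 (n:=5) isT])
  (s2 := [:: o6 (n:=1) isT; o6 (n:=2) isT; o6 (n:=5) isT])
  (s3 := [:: o6 (n:=0) isT; o6 (n:=1) isT; o6 (n:=4) isT])); by [].
Qed.
Lemma modn_2r a r : (0 < r)%N -> (a < 2 * r)%N -> a %% r = if (a < r)%N then a else a - r.
Proof.
move=> r0 ar; case: ltnP => h; first by rewrite modn_small.
have -> : a = (a - r) + r by rewrite subnK.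
by rewrite modnDr modn_small ?addnK //; lia.
Qed.

Lemma exists_min (I : finType) (i0 : I) (F : I -> int) :
  exists m, forall i, (F m <= F i)%R.
Proof.
case: (@arg_minP _ _ I i0 xpredT F isT) => m _ Hm; exists m => i; exact: Hm.
Qed.

Lemma Cr_not_interval r (r4 : (4 <= r)%N) (lo hi : 'I_r -> int) :
  (forall x, (lo x <= hi x)%R) ->
  (forall x y, x != y -> Cr_rel x y = (lo x <= hi y)%R && (lo y <= hi x)%R) -> False.
Proof.
move=> lohi hrep.
have r0 : (0 < r)%N by lia.
have [m Hm] := exists_min (Ordinal r0) hi.
have mr := ltn_ord m.
pose nx := Ordinal (ltn_pmod m.+1 r0).
pose pv := Ordinal (ltn_pmod (m + r.-1) r0).
have Enx : val nx = if (m.+1 < r)%N then m.+1 else 0.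
  rewrite /= modn_2r //; last by lia. by case: ltnP => // _; lia.
have Epv : val pv = if (m + r.-1 < r)%N then m + r.-1 else m.-1.
  rewrite /= modn_2r //; last by lia. by case: ltnP => // _; lia.
have e1 : Cr_rel m nx by rewrite /Cr_rel eqxx.
have e2 : Cr_rel pv m.
  rewrite /Cr_rel; apply/orP; left; apply/eqP.
  rewrite Epv; case: (ltnP (m + r.-1) r) => c1; rewrite modn_2r; try lia; case: ltnP; lia.
have n1 : m != nx.
  apply/eqP => /(congr1 val); rewrite Enx /=; case: (ltnP m.+1 r); lia.
have n2 : pv != m.
  apply/eqP => /(congr1 val); rewrite Epv /=; case: (ltnP (m + r.-1) r); lia.
have n3 : pv != nx.
  apply/eqP => /(congr1 val); rewrite Enx Epv.
  by case: (ltnP (m + r.-1) r); case: (ltnP m.+1 r); lia.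
have e3 : ~~ Cr_rel pv nx.
  rewrite /Cr_rel negb_or; apply/andP; split; apply/eqP.
    rewrite Enx Epv; case: (ltnP (m + r.-1) r) => c1; case: (ltnP m.+1 r) => c2;
    rewrite modn_2r; try lia; case: ltnP; lia.
  rewrite Enx Epv; case: (ltnP (m + r.-1) r) => c1; case: (ltnP m.+1 r) => c2;
  rewrite modn_2r; try lia; case: ltnP; lia.
move: e1 e2 e3; rewrite hrep // hrep // hrep //.
have := Hm nx; have := Hm pv; have := lohi nx; have := lohi pv; lia.
Qed.

Lemma B0_sub (U : finType) (h : rel U) (T : finType) (e : rel T) :
  B0 e -> induced_sub h e ->
  exists Q : U -> straight_path, (forall x, (0 < sp_len (Q x))%N) /\
    forall x y, x != y -> (h x y <-> exists g, on_path (Q x) g /\ on_path (Q y) g).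
Proof.
case=> P [Pl Pe] [f [fi fe]]; exists (P \o f); split => [x|x y nxy /=]; first exact: Pl.
rewrite -fe; apply: Pe; apply: contra nxy => /eqP /fi ->; exact: eqxx.
Qed.

Section Glue.
Variables (U : finType) (h : rel U) (Q : U -> straight_path).
Hypothesis Ql : forall x, (0 < sp_len (Q x))%N.
Hypothesis Qh : forall x y, x != y -> (h x y <-> exists g, on_path (Q x) g /\ on_path (Q y) g).

Definition key x := (sp_dir (Q x), spline (Q x)).

Lemma key_edge x y : h x y -> key x = key y.
Proof.
case: (eqVneq x y) => [->//|nxy] /(Qh nxy) /share_iff.
by case/(_ (Ql x) (Ql y)) => d l _ _; rewrite /key d l.
Qed.

Lemma key_connect x y : connect h x y -> key x = key y.
Proof.
case/connectP => p; elim: p x => [|z p IH] x /=; first by move=> _ ->.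
by case/andP => hxz pz ly; rewrite (key_edge hxz) (IH z).
Qed.

Lemma interval_of x0 : (forall x, key x = key x0) ->
  exists lo hi : U -> int, (forall x, (lo x <= hi x)%R) /\
   forall x y, x != y -> h x y = (lo x <= hi y)%R && (lo y <= hi x)%R.
Proof.
move=> K; exists (fun x => sppos (Q x)), (fun x => sppos (Q x) + (sp_len (Q x))%:Z - 1)%R.
split => [x|x y nxy]; first by have := Ql x; lia.
have := K x; have := K y; rewrite /key => -[d1 l1] [d2 l2].
apply/idP/idP.
  move/(Qh nxy)/share_iff => /(_ (Ql x) (Ql y)) [_ _ a b]; apply/andP; split; lia.
move/andP=> [a b]; apply/(Qh nxy)/share_iff => //; split; try lia; congruence.
Qed.
End Glue.




Lemma forward (T : finType) (e : rel T) : B0 e ->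
  [/\ ~ induced_sub M2_rel e, ~ induced_sub M3_rel e &
       forall r : nat, (4 <= r)%N -> ~ induced_sub (Cr_rel (r:=r)) e].
Proof.
move=> B; split.
- move=> /(B0_sub B) [Q [Ql Qh]].
  have KE := key_edge Ql Qh.
  have k1 : key Q (o7 (n:=1) isT) = key Q (o7 (n:=0) isT) by apply: KE.
  have k2 : key Q (o7 (n:=2) isT) = key Q (o7 (n:=0) isT) by apply: KE.
  have k3 : key Q (o7 (n:=3) isT) = key Q (o7 (n:=0) isT) by apply: KE.
  have k4 : key Q (o7 (n:=4) isT) = key Q (o7 (n:=0) isT) by rewrite -k1; apply: KE.
  have k5 : key Q (o7 (n:=5) isT) = key Q (o7 (n:=0) isT) by rewrite -k2; apply: KE.
  have k6 : key Q (o7 (n:=6) isT) = key Q (o7 (n:=0) isT) by rewrite -k3; apply: KE.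
  have [lo [hi [A1 A2]]] := interval_of Ql Qh (x0 := o7 (n:=0) isT)
    (ord7_cases (P := fun x => key Q x = key Q (o7 (n:=0) isT)) erefl k1 k2 k3 k4 k5 k6).
  exact: (M2_not_interval A1 A2).
- move=> /(B0_sub B) [Q [Ql Qh]].
  have KE := key_edge Ql Qh.
  have k1 : key Q (o6 (n:=1) isT) = key Q (o6 (n:=0) isT) by apply: KE.
  have k2 : key Q (o6 (n:=2) isT) = key Q (o6 (n:=0) isT) by apply: KE.
  have k3 : key Q (o6 (n:=3) isT) = key Q (o6 (n:=0) isT) by apply: KE.
  have k4 : key Q (o6 (n:=4) isT) = key Q (o6 (n:=0) isT) by rewrite -k1; apply: KE.
  have k5 : key Q (o6 (n:=5) isT) = key Q (o6 (n:=0) isT) by rewrite -k2; apply: KE.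
  have [lo [hi [A1 A2]]] := interval_of Ql Qh (x0 := o6 (n:=0) isT)
    (ord6_cases (P := fun x => key Q x = key Q (o6 (n:=0) isT)) erefl k1 k2 k3 k4 k5).
  exact: (M3_not_interval A1 A2).
- move=> r r4 /(B0_sub B) [Q [Ql Qh]].
  have r0 : (0 < r)%N by lia.
  have K : forall i (Hi : (i < r)%N), key Q (Ordinal Hi) = key Q (Ordinal r0).
    elim=> [|i IH] Hi; first by congr (key Q _); apply: val_inj.
    have Hi' : (i < r)%N by lia.
    rewrite -(IH Hi'); apply: esym; apply: (key_edge Ql Qh).
    by rewrite /Cr_rel /= modn_small ?eqxx.
  have [lo [hi [A1 A2]]] := interval_of Ql Qh (x0 := Ordinal r0)
    (fun x => match x with Ordinal i Hi => K i Hi end).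
  exact: (Cr_not_interval r4 A1 A2).
Qed.

Theorem theorem5p7 (T : finType) (e : rel T) :
  cactus e ->
  (B0 e <->
   [/\ ~ induced_sub M2_rel e,
       ~ induced_sub M3_rel e &
       forall r : nat, (4 <= r)%N -> ~ induced_sub (Cr_rel (r:=r)) e]).
Proof.
case=> [[esym eirr] conn ecact]; split; first exact: forward.
case=> noM2 noM3 noC.
case: (pickP (@predT T)) => [x0 _|none]; last first.
  exists (fun _ => StraightPath (Posz 0, Posz 0) false 1); split => // u.
  by have := none u.
pose ecc x := \max_(y : T) dist conn x y.
pose a := [arg max_(x > x0) ecc x].
pose b := [arg max_(y > a) dist conn a y].
have ecc_hyp : forall g y, dist conn g y <= lay conn a b.
  move=> g y; rewrite /lay.
  have h1 : dist conn g y <= ecc g := leq_bigmax (F := fun y => dist conn g y) y.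
  have h2 : ecc g <= ecc a.
    rewrite /a; case: arg_maxnP => // x _ H.
    exact: H.
  have h3 : ecc a <= dist conn a b.
    apply/bigmax_leqP => z _; rewrite /b; case: arg_maxnP => // w _ H.
    exact: H.
  exact: leq_trans h1 (leq_trans h2 h3).
by eapply B0_ord; eassumption.
Qed.
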